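(* $\det(AA^\top)\ge\rho(A)^{2n}$.
   Context: $A=[a_1|\cdots|a_m]\in\mathbb{R}^{n\times m}$ has columns of unit Euclidean norm and $\{A\lambda:\lambda\ge0\}=\mathbb{R}^n$. For a matrix $M$, $\|M\|_{1,2}:=\max_{\|w\|_1=1}\|Mw\|_2$. Define $\rho(A):=\min_{\Delta A\in\mathbb{R}^{n\times m}}\{\|\Delta A\|_{1,2}:\ \exists\,v\neq0 \text{ with } (A+\Delta A)^\top v\le0\}$. *)

(* Defs.v *)
From HB Require Import structures.
From mathcomp Require Import all_boot all_order all_algebra.
Set Implicit Arguments. Unset Strict Implicit. Unset Printing Implicit Defensive.
Import Order.TTheory GRing.Theory Num.Theory.
Local Open Scope ring_scope.

Definition norm2 (R : rcfType) (k : nat) (x : 'cV[R]_k) : R :=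
  Num.sqrt (\sum_(i < k) x i 0 ^+ 2).

Definition norm1 (R : rcfType) (k : nat) (x : 'cV[R]_k) : R :=
  \sum_(i < k) `|x i 0|.

Definition is_norm12 (R : rcfType) (n m : nat) (M : 'M[R]_(n, m)) (r : R) : Prop :=
  (exists w : 'cV[R]_m, norm1 w = 1 /\ norm2 (M *m w) = r) /\
  (forall w : 'cV[R]_m, norm1 w = 1 -> norm2 (M *m w) <= r).

Definition rho_feasible (R : rcfType) (n m : nat) (A : 'M[R]_(n, m)) (s : R) : Prop :=
  exists dA : 'M[R]_(n, m), is_norm12 dA s /\
    exists v : 'cV[R]_n, v != 0 /\ forall j : 'I_m, ((A + dA)^T *m v) j 0 <= 0.

Definition is_rho (R : rcfType) (n m : nat) (A : 'M[R]_(n, m)) (r : R) : Prop :=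
  rho_feasible A r /\ (forall s, rho_feasible A s -> r <= s).

(* Main.v *)
Require Import Defs.
From HB Require Import structures.
From mathcomp Require Import all_boot all_order all_algebra.
From mathcomp Require Import ring lra.
Import Order.TTheory GRing.Theory Num.Theory.
Local Open Scope ring_scope.
Set Implicit Arguments. Unset Strict Implicit.

Section S.
Variable R : rcfType.

Lemma qf_block n1 n2 (u : 'cV[R]_n1) (y : 'cV[R]_n2) a b d D :
  (col_mx u y)^T *m block_mx a b d D *m col_mx u y =
  u^T *m a *m u + y^T *m d *m u + (u^T *m b *m y + y^T *m D *m y).
Proof. by rewrite tr_col_mx mul_row_block mul_row_col !mulmxDl. Qed.

Lemma qq n1 n2 (u : 'cV[R]_n1) (y : 'cV[R]_n2) :
  (col_mx u y)^T *m col_mx u y = u^T *m u + y^T *m y.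
Proof. by rewrite tr_col_mx mul_row_col. Qed.

Lemma tr11 (u : 'M[R]_1) : u^T = u.
Proof. by apply/matrixP=> i j; rewrite !ord1 mxE. Qed.

Lemma fld (x y : R) : x != 0 -> -(x^-1*y)*(x*(-(x^-1*y))) + -(x^-1*y)*y = 0.
Proof. by move=> h; field. Qed.

Lemma step n (M : 'M[R]_(1+n)) (c : R) : 0 < c -> M^T = M ->
 (forall x : 'cV_(1+n), c * (x^T *m x) 0 0 <= (x^T *m M *m x) 0 0) ->
 exists S : 'M[R]_n, [/\ S^T = S,
   (forall y : 'cV_n, c * (y^T *m y) 0 0 <= (y^T *m S *m y) 0 0),
   c <= ulsubmx M 0 0 & \det M = ulsubmx M 0 0 * \det S].
Proof.
move=> c0 sym H.
set a := ulsubmx M; set b := ursubmx M; set d := dlsubmx M; set D := drsubmx M.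
have eM : M = block_mx a b d D by rewrite submxK.
have edb : d = b^T by rewrite /d /b trmx_ursub sym.
have eD : D^T = D by rewrite /D trmx_drsub sym.
set al := a 0 0.
have ea : a = al%:M by rewrite [LHS]mx11_scalar.
have alc : c <= al.
  have := H (col_mx 1%:M 0); rewrite qq eM qf_block tr11 trmx0.
  rewrite !mulmx0 !mul0mx !mul1mx !mulmx1 !addr0 ?add0r !mxE.
  rewrite eqxx /= mulr1 /al /a !mxE; exact: id.
have al0 : al != 0 by rewrite gt_eqF // (lt_le_trans c0).
exists (D - al^-1 *: (d *m b)); split => //.
- by rewrite linearB /= linearZ /= trmx_mul eD edb trmxK.
- move=> y; set β := (b *m y) 0 0.
  have e2 : b *m y = β%:M by rewrite [LHS]mx11_scalar.
  have e1 : y^T *m d = β%:M by rewrite edb -trmx_mul e2 tr11.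
  have := H (col_mx (-(al^-1*β))%:M y); rewrite qq eM qf_block tr11 ea.
  rewrite !mul_mx_scalar !mul_scalar_mx -!scalemxAl e1 e2.
  rewrite mulmxBr mulmxBl -scalemxAr -scalemxAl mulmxA e1 mul_scalar_mx -scalemxAl e2.
  set Q := y^T *m D *m y; set Y := y^T *m y.
  rewrite !mxE !eqxx /= !mulr1n => h.
  set s1 := \sum_(j < n) _ in h *; set s2 := \sum_(j < n) _ in h *.
  have hk : 0 <= c * ((al^-1*β) * (al^-1*β)).
    by apply: mulr_ge0; [exact: ltW| rewrite -expr2 sqr_ge0].
  have e : -(al^-1*β)*(al*(-(al^-1*β))) + -(al^-1*β)*β = 0 by apply: fld.
  lra.
- pose L : 'M[R]_(1+n) := block_mx 1%:M 0 (-(al^-1) *: d) 1%:M.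
  have eL : L *m M = block_mx a b 0 (D - al^-1 *: (d *m b)).
    rewrite eM mulmx_block !mul1mx !mul0mx !addr0 ?add0r.
    congr block_mx.
      by rewrite ea mul_mx_scalar scalerA mulrN mulrV ?unitfE // scaleN1r addNr.
    by rewrite -scalemxAl scaleNr addrC.
  have := congr1 determinant eL; rewrite det_mulmx det_lblock !det1 !mul1r.
  by rewrite det_ublock det_mx11.
Qed.

Lemma detPD n (M : 'M[R]_n) (c : R) : 0 < c -> M^T = M ->
  (forall x : 'cV_n, c * (x^T *m x) 0 0 <= (x^T *m M *m x) 0 0) ->
  c ^+ n <= \det M.
Proof.
elim: n M => [|n IH] M c0 sym H; first by rewrite det_mx00 expr0.
have [S [sS HS cal ->]] := @step n M c c0 sym H.
rewrite exprS; apply: ler_pM => //; first exact: ltW.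
  exact: exprn_ge0 (ltW c0).
exact: IH.
Qed.

Lemma qfE k (x : 'cV[R]_k) : (x^T *m x) 0 0 = \sum_(i < k) x i 0 ^+ 2.
Proof. by rewrite mxE; apply: eq_bigr => i _; rewrite mxE expr2. Qed.

Lemma norm2_ge0 k (x : 'cV[R]_k) : 0 <= norm2 x.
Proof. exact: sqrtr_ge0. Qed.

Lemma norm2_sq k (x : 'cV[R]_k) : norm2 x ^+ 2 = (x^T *m x) 0 0.
Proof.
by rewrite /norm2 sqr_sqrtr ?qfE // sumr_ge0 // => i _; rewrite sqr_ge0.
Qed.

Lemma norm2Z k (a : R) (x : 'cV[R]_k) : norm2 (a *: x) = `|a| * norm2 x.
Proof.
rewrite /norm2; under eq_bigr do rewrite mxE exprMn.
rewrite -mulr_sumr sqrtrM ?sqr_ge0 // sqrtr_sqr //.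
Qed.

Lemma qf0 k (x : 'cV[R]_k) : (x^T *m x) 0 0 = 0 -> x = 0.
Proof.
rewrite qfE => /psumr_eq0P h; apply/matrixP => i j; rewrite ord1 mxE.
by apply/eqP; rewrite -sqrf_eq0 h // => l _; rewrite sqr_ge0.
Qed.

Lemma qf_ge0 k (x : 'cV[R]_k) : 0 <= (x^T *m x) 0 0.
Proof. by rewrite qfE sumr_ge0 // => i _; rewrite sqr_ge0. Qed.

Lemma entry_le_norm2 k (x : 'cV[R]_k) i : `|x i 0| <= norm2 x.
Proof.
rewrite /norm2 -sqrtr_sqr ler_sqrt; last by rewrite sumr_ge0 // => l _; rewrite sqr_ge0.
rewrite (bigD1 i) //= lerDl sumr_ge0 // => l _; by rewrite sqr_ge0.
Qed.

Lemma norm1_delta m (j : 'I_m) : norm1 (delta_mx j 0 : 'cV[R]_m) = 1.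
Proof.
rewrite /norm1 (bigD1 j) //= mxE !eqxx /= mulr1n normr1 big1 ?addr0 //.
by move=> i /negbTE h; rewrite mxE h /= normr0.
Qed.

End S.

Theorem proposition11 (R : rcfType) (n m : nat) (A : 'M[R]_(n, m)) (r : R)
  (hunit : forall j : 'I_m, norm2 (col j A) = 1)
  (hcone : forall b : 'cV[R]_n, exists lam : 'cV[R]_m,
             (forall j : 'I_m, 0 <= lam j 0) /\ A *m lam = b)
  (hrho : is_rho A r) :
  r ^+ (2 * n) <= \det (A *m A^T).
Proof.
have [[dA0 [hn0 [v [v0 hv]]]] hmin] := hrho.
have [[w0 [hw0 hw0n]] hub] := hn0.
have r0 : 0 <= r by rewrite -hw0n norm2_ge0.
have rpos : 0 < r.
  rewrite lt_neqAle r0 andbT; apply/eqP => er.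
  have dA00 : dA0 = 0.
    apply/matrixP => i j; rewrite [RHS]mxE.
    have := hub (delta_mx j 0) (norm1_delta R j); rewrite -er => h.
    have e : dA0 *m (delta_mx j 0 : 'cV[R]_m) = 0.
      apply: qf0; rewrite -norm2_sq; apply/eqP; rewrite sqrf_eq0 eq_le h norm2_ge0 //.
    by have := congr1 (fun X : 'cV[R]_n => X i 0) e; rewrite -colE !mxE.
  move: hv; rewrite dA00 addr0 => hv.
  have [lam [hl hAl]] := hcone v.
  move/eqP: v0; apply; apply: qf0; apply/eqP; rewrite eq_le qf_ge0 andbT.
  rewrite -{1}hAl trmx_mul -mulmxA mxE.
  apply: sumr_le0 => j _; rewrite mxE; apply: mulr_ge0_le0 => //; exact: hv.
have key : forall x : 'cV[R]_n,
    r^+2 * (x^T *m x) 0 0 <= (x^T *m (A *m A^T) *m x) 0 0.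
  move=> x.
  have eq : x^T *m (A *m A^T) *m x = (A^T *m x)^T *m (A^T *m x).
    by rewrite trmx_mul trmxK !mulmxA.
  rewrite eq -!norm2_sq.
  have [->|x0] := eqVneq x 0.
    by rewrite norm2_sq trmx0 mul0mx mxE mulr0 sqr_ge0.
  set g := A^T *m x; set t := norm2 g; set nu := norm2 x.
  have nu0 : 0 < nu.
    rewrite lt_neqAle norm2_ge0 andbT; apply/eqP => h; move/eqP: x0; apply.
    by apply: qf0; rewrite -norm2_sq -/nu -h expr2 mulr0.
  have t0 : 0 <= t by exact: norm2_ge0.
  pose s := t / nu.
  have s0 : 0 <= s by rewrite /s divr_ge0 // ltW.
  pose ones := const_mx 1 : 'M[R]_(1, m).
  pose dA := (- (s / nu)) *: (x *m ones).
  have dAw : forall w, norm2 (dA *m w) = s * `|(ones *m w) 0 0|.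
    move=> w; set σ0 := (ones *m w) 0 0.
    rewrite /dA -scalemxAl -mulmxA [ones *m w]mx11_scalar -/σ0 mul_mx_scalar.
    rewrite scalerA norm2Z normrM normrN (ger0_norm (divr_ge0 s0 (ltW nu0))) -/nu.
    by rewrite mulrAC divfK // lt0r_neq0.
  have feas : rho_feasible A s.
    exists dA; split.
      split.
        exists (\col_j `|w0 j 0|); split.
          rewrite /norm1; under eq_bigr do rewrite mxE normr_id.
          exact: hw0.
        rewrite dAw mxE; under eq_bigr do rewrite !mxE mul1r.
        have -> : \sum_(j < m) `|w0 j 0| = 1 by exact: hw0.
        by rewrite normr1 mulr1.
      move=> w hw; rewrite dAw -[leRHS]mulr1; apply: ler_wpM2l => //.
      rewrite mxE; apply: le_trans (ler_norm_sum _ _ _) _.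
      under eq_bigr do rewrite !mxE mul1r.
      by rewrite -hw.
    exists x; split => // j.
    have edx : (dA^T *m x) j 0 = - t.
      rewrite /dA linearZ /= trmx_mul -scalemxAl -mulmxA [x^T *m x]mx11_scalar.
      rewrite -norm2_sq -/nu mul_mx_scalar !mxE /s; field; exact: lt0r_neq0.
    rewrite linearD /= mulmxDl mxE edx -/g subr_le0.
    exact: le_trans (ler_norm _) (entry_le_norm2 g j).
  have rs := hmin s feas.
  rewrite /s ler_pdivlMr // in rs.
  have rn : 0 <= r * nu by rewrite mulr_ge0 // ltW.
  by rewrite -exprMn !expr2; apply: ler_pM.
have sym : (A *m A^T)^T = A *m A^T by rewrite trmx_mul trmxK.
have := @detPD R n (A *m A^T) (r^+2) (exprn_gt0 2 rpos) sym key.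
by rewrite -exprM.
Qed.
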